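(* For each of the following finite posets $\mathcal{P}$ one has $b(\mathfrak{g}^{\prec}(\mathcal{P}))=|Rel_{\overline{C}}(\mathcal{P})|$: (a) $\mathcal{P}=\mathbf{2\times n}$ for $n\ge 1$; (b) $\mathcal{P}=T_m(n)$ for $m\ge 2$, $n\ge 1$.
   Context: All Lie algebras are over an algebraically closed field $\mathbf{k}$ of characteristic zero. For a finite poset $\mathcal{P}$, write $x\prec y$ for strict relations; a strict relation $p\prec q$ is covering if there is no $z$ with $p\prec z\prec q$, and $Rel_{\overline{C}}(\mathcal{P})$ is the set of non-covering strict relations. $\mathfrak{g}^{\prec}(\mathcal{P})$ is the Lie algebra (commutator bracket) of matrices spanned by matrix units $E_{p,q}$ with $p\prec q$. The breadth is $b(L)=\max_{x\in L}\operatorname{rank}(\mathrm{ad}_x)$. $\mathbf{2\times n}$ is the poset on $\{i_j : 1\le i\le n,\ 1\le j\le 2\}$ with $i_j\preceq i'_{j'}$ iff $i\le i'$ and $j\le j'$. $T_m(n)$ is the rooted complete $m$-ary tree of depth $n$: the poset on $\{i_k : 1\le k\le n,\ 1\le i\le m^{k-1}\}$ whose covering relations are $i_k\prec j_{k+1}$ for $1\le k<n$, $1\le i\le m^{k-1}$, $m(i-1)+1\le j\le mi$, with the order the transitive closure of these. *)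

(* Defs.v *)
From HB Require Import structures.
From mathcomp Require Import all_boot all_order all_algebra.
Set Implicit Arguments. Unset Strict Implicit. Unset Printing Implicit Defensive.
Import GRing.Theory.
Local Open Scope ring_scope.

(* A finite poset is given by a finType T and its strict order relation lt
   (x < y).  Matrices indexed by T are realised as 'M[F]_#|T| via enum_rank. *)

(* g^<(P): span of the matrix units E_{p,q} with p < q, as a subspace of the
   (associative) matrix algebra; the Lie bracket is the commutator. *)
Definition gprec (F : fieldType) (T : finType) (lt : rel T) : {vspace 'M[F]_#|T|} :=
  (<<[seq delta_mx (enum_rank pq.1) (enum_rank pq.2)
      | pq <- enum [pred pq : T * T | lt pq.1 pq.2]]>>)%VS.

Definition ad_rank (F : fieldType) (T : finType) (lt : rel T)
    (x : 'M[F]_#|T|) : nat :=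
  \dim (linfun (fun y : 'M[F]_#|T| => x *m y - y *m x) @: gprec F lt)%VS.

Definition breadth_is (F : fieldType) (T : finType) (lt : rel T) (b : nat) : Prop :=
  (exists2 x, x \in gprec F lt & ad_rank lt x = b) /\
  (forall x, x \in gprec F lt -> (ad_rank lt x <= b)%N).

Definition noncover_rels (T : finType) (lt : rel T) : {set T * T} :=
  [set pq : T * T | lt pq.1 pq.2 && [exists z, lt pq.1 z && lt z pq.2]].

(* The poset 2 x n: elements (i, j) with i : 'I_n, j : 'I_2 (0-based),
   (i,j) <= (i',j') iff i <= i' and j <= j'. Strict order: *)
Definition two_lt (n : nat) (a b : 'I_n * 'I_2) : bool :=
  [&& a != b, (a.1 <= b.1)%N & (a.2 <= b.2)%N].

(* The rooted complete m-ary tree T_m(n): level k (0-based, k < n) has m^k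
   nodes (0-based index i < m^k). Covering relations: (k, i) < (k+1, j) with
   m*i <= j <= m*i + m - 1, i.e. j %/ m = i (0-based form of
   m(i-1)+1 <= j <= m i). *)
Definition tree_node (m n : nat) : finType := {k : 'I_n & 'I_(m ^ k)}.

Definition tree_cover (m n : nat) : rel (tree_node m n) :=
  fun a b => (((tag b : nat) == (tag a).+1) && ((tagged b : nat) %/ m == tagged a))%N.

Definition tree_lt (m n : nat) : rel (tree_node m n) :=
  fun a b => (a != b) && connect (@tree_cover m n) a b.

(* Main.v *)
Require Import Defs.
From HB Require Import structures.
From mathcomp Require Import all_boot all_order all_algebra zify.
Set Implicit Arguments. Unset Strict Implicit. Unset Printing Implicit Defensive.
Import GRing.Theory.
Local Open Scope ring_scope.

Section Gen.
Variables (F : fieldType) (T : finType).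
Local Notation k := #|T|.
Local Notation M := 'M[F]_k.

Definition adm (x : M) (y : M) : M := x *m y - y *m x.
Lemma adm_lin x : linear (adm x).
Proof. move=> a y z; rewrite /adm mulmxDr mulmxDl -scalemxAr -scalemxAl scalerBr opprD addrACA. done. Qed.
HB.instance Definition _ x := GRing.isLinear.Build F M M _ (adm x) (adm_lin x).

Lemma linfun_adm x y : linfun (fun y : M => x *m y - y *m x) y = adm x y.
Proof. exact: (lfunE (adm x)). Qed.
End Gen.
Section Supp.
Variables (F : fieldType) (T : finType).
Local Notation k := #|T|.
Local Notation M := 'M[F]_k.
Definition D (pq : T * T) : M := delta_mx (enum_rank pq.1) (enum_rank pq.2).

Lemma DE pq a b : D pq (enum_rank a) (enum_rank b) = ((a == pq.1) && (b == pq.2))%:R.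
Proof. by rewrite /D mxE !(inj_eq enum_rank_inj). Qed.

Lemma span_supp (s : seq (T * T)) (A : M) : A \in <<map D s>>%VS ->
  forall a b, A (enum_rank a) (enum_rank b) != 0 -> (a, b) \in s.
Proof.
move=> /(@coord_span _ _ _ (in_tuple (map D s))) -> a b.
apply: contraNT => abs; rewrite summxE big1 // => i _.
rewrite mxE.
have : (map D s)`_i \in map D s by apply: mem_nth; rewrite -[X in (_ < X)%N](size_tuple (in_tuple (map D s))).
case/mapP=> pq pqs ->; rewrite DE.
case: eqP => [ea|]; last by rewrite mulr0.
case: eqP => [eb|]; last by rewrite mulr0.
by move: abs; rewrite ea eb -surjective_pairing pqs.
Qed.

Lemma supp_span (s : seq (T * T)) (A : M) :
  (forall a b, A (enum_rank a) (enum_rank b) != 0 -> (a, b) \in s) ->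
  A \in <<map D s>>%VS.
Proof.
move=> H; rewrite [A]matrix_sum_delta; apply: memv_suml => i _; apply: memv_suml => j _.
have [->|nz] := eqVneq (A i j) 0; first by rewrite scale0r mem0v.
apply: memvZ; apply: memv_span.
have := H (enum_val i) (enum_val j); rewrite !enum_valK => /(_ nz) hs.
by apply/mapP; exists (enum_val i, enum_val j) => //; rewrite /D /= !enum_valK.
Qed.

Lemma free_D (s : seq (T * T)) : uniq s -> free (map D s).
Proof.
elim: s => [|pq s IH] /=; first by rewrite /free span_nil dimv0.
case/andP=> nin us; rewrite free_cons IH // andbT.
apply/negP => /span_supp /(_ pq.1 pq.2).
rewrite DE !eqxx /= oner_eq0 -surjective_pairing => /(_ isT).
by rewrite (negbTE nin).
Qed.

Lemma dim_D (s : seq (T * T)) : uniq s -> \dim <<map D s>> = size s.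
Proof. by move/free_D/eqP ->; rewrite size_map. Qed.
End Supp.
Section Main.
Variables (F : fieldType) (T : finType).
Local Notation k := #|T|.
Local Notation M := 'M[F]_k.
Local Notation r := enum_rank.

Lemma mem_gprec (lt : rel T) (A : M) :
  (A \in gprec F lt) <-> (forall a b, A (r a) (r b) != 0 -> lt a b).
Proof.
split.
  by move=> /span_supp H a b /H; rewrite mem_enum.
by move=> H; apply: supp_span => a b /H; rewrite mem_enum.
Qed.

Definition Nsp (lt : rel T) : {vspace M} := <<map (@D F T) (enum (noncover_rels lt))>>%VS.

Lemma mem_Nsp (lt : rel T) (A : M) :
  (A \in Nsp lt) <-> (forall a b, A (r a) (r b) != 0 -> (a, b) \in noncover_rels lt).
Proof.
split.
  by move=> /span_supp H a b /H; rewrite mem_enum.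
by move=> H; apply: supp_span => a b /H; rewrite mem_enum.
Qed.

Lemma dim_Nsp lt : \dim (Nsp lt) = #|noncover_rels lt|.
Proof. by rewrite /Nsp dim_D ?enum_uniq // cardE. Qed.

Lemma prod_nz (x y : M) a b : (x *m y) (r a) (r b) != 0 ->
  exists z, x (r a) (r z) != 0 /\ y (r z) (r b) != 0.
Proof.
move=> nz.
have [/existsP [z /andP [h1 h2]]|/existsPn H] :=
  boolP [exists z, (x (r a) (r z) != 0) && (y (r z) (r b) != 0)].
  by exists z.
move: nz; rewrite mxE big1 ?eqxx // => kk _.
have := H (enum_val kk); rewrite enum_valK negb_and !negbK.
by case/orP=> /eqP ->; rewrite ?mul0r ?mulr0.
Qed.

Definition X0 (c : rel T) : M := \matrix_(i, j) (c (enum_val i) (enum_val j))%:R.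
Lemma X0E (c : rel T) (a b : T) : X0 c (r a) (r b) = (c a b)%:R.
Proof. by rewrite mxE !enum_rankK. Qed.

Lemma L1 (c : rel T) (u q a b : T) : (X0 c *m D F (u, q)) (r a) (r b) = (c a u)%:R * (b == q)%:R.
Proof.
rewrite mxE (bigD1 (r u)) //= big1 ?addr0.
  by rewrite X0E DE eqxx.
move=> kk nk; rewrite -(enum_valK kk) DE /=.
case: eqP => [e|]; last by rewrite mulr0.
by move: nk; rewrite -e enum_valK eqxx.
Qed.

Lemma L2 (c : rel T) (u q a b : T) : (D F (u, q) *m X0 c) (r a) (r b) = (a == u)%:R * (c q b)%:R.
Proof.
rewrite mxE (bigD1 (r q)) //= big1 ?addr0.
  by rewrite X0E DE eqxx andbT.
move=> kk nk; rewrite -(enum_valK kk) DE /=.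
case: (enum_val kk =P q) => [e|]; last by rewrite andbF mul0r.
by move: nk; rewrite -e enum_valK eqxx.
Qed.

Lemma L3 (c : rel T) (u q a b : T) : (\sum_(b0 | c q b0) D F (u, b0)) (r a) (r b) = (a == u)%:R * (c q b)%:R.
Proof.
rewrite summxE big_mkcond /= (bigD1 b) //= big1 ?addr0.
  by case: (c q b); rewrite ?DE ?eqxx ?andbT ?mulr1 ?mulr0.
move=> b0 nb; case: (c q b0) => //; rewrite DE /= [b == _]eq_sym (negbTE nb) andbF //.
Qed.

Theorem generic (lt c : rel T) (h : T -> nat) :
  (forall a b d, lt a b -> lt b d -> lt a d) ->
  (forall a b, c a b -> lt a b) ->
  (forall p q, (p, q) \in noncover_rels lt -> exists u,
     [/\ c p u, lt u q, (forall a, c a u -> a = p) &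
         (forall b, c q b -> (u, b) \in noncover_rels lt /\ (h q < h b)%N)]) ->
  breadth_is F lt #|noncover_rels lt|.
Proof.
move=> ltT cl Hc.
have upper : forall x, x \in gprec F lt ->
    ((linfun (fun y : M => x *m y - y *m x)) @: gprec F lt <= Nsp lt)%VS.
  move=> x /mem_gprec xg; apply/subvP => v /memv_imgP [y /mem_gprec yg ->].
  rewrite linfun_adm; apply/mem_Nsp => a b.
  have key : forall (x' y' : M), (forall a b, x' (r a) (r b) != 0 -> lt a b) ->
     (forall a b, y' (r a) (r b) != 0 -> lt a b) ->
     (x' *m y') (r a) (r b) != 0 -> (a, b) \in noncover_rels lt.
    move=> x' y' hx hy /prod_nz [z [h1 h2]].
    have l1 := hx _ _ h1; have l2 := hy _ _ h2.
    rewrite inE /=; rewrite (ltT _ _ _ l1 l2) /=; apply/existsP; exists z.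
    by rewrite l1 l2.
  have -> : (x *m y - y *m x) (r a) (r b) = (x *m y) (r a) (r b) - (y *m x) (r a) (r b).
    by rewrite [LHS]mxE [X in _ + X = _]mxE.
  have [z1|z1] := eqVneq ((x *m y) (r a) (r b)) 0; last by move=> _; exact: key z1.
  have [z2|z2] := eqVneq ((y *m x) (r a) (r b)) 0; last by move=> _; exact: key z2.
  by rewrite z1 z2 subrr eqxx.
split; last first.
  move=> x xg; rewrite /ad_rank -dim_Nsp; apply: dimvS; exact: upper.
pose x := X0 c.
have xg : x \in gprec F lt.
  apply/mem_gprec => a b; rewrite X0E; case E: (c a b); first by move=> _; exact: cl.
  by rewrite eqxx.
exists x => //.
rewrite /ad_rank -dim_Nsp; apply/eqP; rewrite eqn_leq dimvS ?upper //=.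
apply: dimvS.
set I := (_ @: _)%VS.
pose K := \max_(b : T) h b.
have main : forall d p q, (p, q) \in noncover_rels lt -> (K - h q < d)%N -> D F (p, q) \in I.
  elim=> [//|d IH] p q pq hd.
  have [u [cpu luq uniq err]] := Hc p q pq.
  have -> : D F (p, q) = adm x (D F (u, q)) + \sum_(b0 | c q b0) D F (u, b0).
    apply/matrixP => i j; rewrite -(enum_valK i) -(enum_valK j).
    move: (enum_val i) (enum_val j) => a b.
    rewrite /adm [in RHS]mxE [in RHS]mxE [X in _ + X + _]mxE L1 L2 L3 subrK DE /=.
    have -> : c a u = (a == p) by apply/idP/eqP => [/uniq|->].
    by rewrite -natrM mulnb.
  apply: memvD.
    apply/memv_imgP; exists (D F (u, q)); last by rewrite linfun_adm.
    apply/mem_gprec => a b; rewrite DE /=; case: (a =P u) => [->|_]; case: (b =P q) => [->|_] //=; by rewrite ?eqxx.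
  apply: memv_suml => b0 cqb0.
  have [nc hqb] := err b0 cqb0.
  apply: IH nc _.
  have : (h b0 <= K)%N by apply: (leq_bigmax b0).
  move: hd hqb; lia.
apply/span_subvP => v /mapP [[p q] pq ->].
rewrite mem_enum in pq.
apply: (main (K - h q).+1) => //.
Qed.
End Main.
Section Two.
Variable n : nat.
Local Notation T := ('I_n * 'I_2)%type.

Lemma pairE (a b : T) : (a == b) = ((a.1 : nat) == b.1) && ((a.2 : nat) == b.2).
Proof. by case: a b => [a1 a2] [b1 b2]. Qed.

Lemma ltE (a b : T) : two_lt a b =
  [&& ((a.1 : nat) != b.1) || ((a.2 : nat) != b.2), (a.1 <= b.1)%N & (a.2 <= b.2)%N].
Proof. by rewrite /two_lt pairE negb_and. Qed.

Definition rowc (a b : T) : bool := ((a.2 : nat) == b.2) && ((b.1 : nat) == (a.1).+1).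

Lemma two_trans (a b d : T) : two_lt a b -> two_lt b d -> two_lt a d.
Proof.
rewrite !ltE; have := ltn_ord a.2; have := ltn_ord b.2; have := ltn_ord d.2; lia.
Qed.

Lemma rowc_lt (a b : T) : rowc a b -> two_lt a b.
Proof. rewrite /rowc ltE; lia. Qed.

Lemma nc_two (p q : T) : (p, q) \in noncover_rels (@two_lt n) ->
  (p.1 < q.1)%N /\ (p.2 <= q.2)%N /\ ((p.2 : nat) = q.2 -> (p.1.+1 < q.1)%N).
Proof.
rewrite inE /= => /andP [_ /existsP [z /andP [h1 h2]]].
move: h1 h2; rewrite !ltE.
have := ltn_ord p.2; have := ltn_ord q.2; have := ltn_ord z.2; lia.
Qed.

Lemma two_hyp (p q : T) : (p, q) \in noncover_rels (@two_lt n) -> exists u,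
     [/\ rowc p u, two_lt u q, (forall a : T, rowc a u -> a = p) &
         (forall b : T, rowc q b -> (u, b) \in noncover_rels (@two_lt n) /\ ((q.1 : nat) < b.1)%N)].
Proof.
move=> pq; have [h1 [h2 h3]] := nc_two pq.
have hu : (p.1.+1 < n)%N by have := ltn_ord q.1; lia.
exists (Ordinal hu, p.2); split.
- by rewrite /rowc /= !eqxx.
- rewrite ltE /=; lia.
- move=> a; rewrite /rowc /= => H; apply/eqP; rewrite pairE; lia.
- move=> b; rewrite /rowc => H; split; last by lia.
  rewrite inE /= ltE /=; apply/andP; split; first by lia.
  apply/existsP; exists q; rewrite !ltE /=; lia.
Qed.
End Two.
Section Tree.
Variables m n : nat.
Local Notation T := (tree_node m n).
Local Notation cov := (@tree_cover m n).
Local Notation lt := (@tree_lt m n).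

Lemma tnode_eq (a b : T) : (tag a : nat) = tag b -> (tagged a : nat) = tagged b -> a = b.
Proof.
case: a => [k i]; case: b => [k' i'] /= e.
have ek : k = k' by apply: val_inj.
subst k' => e'; congr existT; exact: val_inj.
Qed.

Lemma cov_tag (a b : T) : cov a b -> (tag b : nat) = (tag a).+1.
Proof. by rewrite /tree_cover => /andP [/eqP]. Qed.

Lemma path_tag (a : T) s : path cov a s -> (tag (last a s) : nat) = (tag a + size s)%N.
Proof.
elim: s a => [|b s IH] a /=; first by rewrite addn0.
case/andP=> /cov_tag h /IH ->; by rewrite h addSn addnS.
Qed.

Lemma connect_tag (a b : T) : connect cov a b -> (tag a <= tag b)%N /\ ((tag a : nat) = tag b -> a = b).
Proof.
case/connectP=> s ps ->; rewrite (path_tag ps); split; first lia.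
by case: s ps => [|c s] //= _ h; exfalso; move: h; rewrite addnS; move: (nat_of_ord (tag a)) => t; lia.
Qed.

Lemma lt_tag (a b : T) : lt a b -> (tag a < tag b)%N.
Proof.
case/andP=> nab /connect_tag [h1 h2].
rewrite ltn_neqAle h1 andbT; apply/negP => /eqP /h2 e; by rewrite e eqxx in nab.
Qed.

Lemma tree_trans (a b d : T) : lt a b -> lt b d -> lt a d.
Proof.
move=> h1 h2; have t1 := lt_tag h1; have t2 := lt_tag h2.
case/andP: h1 => _ c1; case/andP: h2 => _ c2.
rewrite /tree_lt (connect_trans c1 c2) andbT; apply/negP => /eqP e.
by move: t1 t2; rewrite e; lia.
Qed.

Lemma cov_lt (a b : T) : cov a b -> lt a b.
Proof.
move=> h; rewrite /tree_lt connect1 // andbT; apply/negP => /eqP e.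
by move: (cov_tag h); rewrite e; lia.
Qed.

Lemma tree_hyp (p q : T) : (p, q) \in noncover_rels lt -> exists u,
     [/\ cov p u, lt u q, (forall a : T, cov a u -> a = p) &
         (forall b : T, cov q b -> (u, b) \in noncover_rels lt /\ ((tag q : nat) < tag b)%N)].
Proof.
rewrite inE /= => /andP [lpq /existsP [z /andP [h1 h2]]].
have t1 := lt_tag h1; have t2 := lt_tag h2.
case/andP: lpq => _ /connectP [s ps eq].
case: s ps eq => [_ eq|u s /= /andP [cpu ps] eq].
  by move: t1 t2; rewrite eq /=; lia.
have tu := cov_tag cpu.
have luq : lt u q.
  rewrite /tree_lt; apply/andP; split.
    by apply/negP => /eqP e; move: t1 t2; rewrite -e tu; lia.
  by apply/connectP; exists s.
exists u; split => //.
- move=> a cau; apply: tnode_eq.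
    by have := cov_tag cau; lia.
  by case/andP: cau => _ /eqP <-; case/andP: cpu => _ /eqP <-.
- move=> b cqb; have lqb := cov_lt cqb; have tb := cov_tag cqb; split; last by rewrite tb.
  rewrite inE /= (tree_trans luq lqb) /=; apply/existsP; exists q.
  by rewrite luq lqb.
Qed.
End Tree.

Theorem lemma1 (F : closedFieldType) (hF : [pchar F]%R =i pred0) :
  (forall n : nat, (1 <= n)%N ->
     breadth_is F (@two_lt n) #|noncover_rels (@two_lt n)|) /\
  (forall m n : nat, (2 <= m)%N -> (1 <= n)%N ->
     breadth_is F (@tree_lt m n) #|noncover_rels (@tree_lt m n)|).
Proof.
split.
- move=> n _.
  apply: (@generic F _ (@two_lt n) (@rowc n) (fun a => nat_of_ord a.1)).
  + exact: two_trans.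
  + exact: rowc_lt.
  + exact: two_hyp.
- move=> m n _ _.
  apply: (@generic F _ (@tree_lt m n) (@tree_cover m n) (fun a => nat_of_ord (tag a))).
  + exact: tree_trans.
  + exact: cov_lt.
  + exact: tree_hyp.
Qed.
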